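(* Let $K$ be a field of characteristic $p>3$ and $n\ge1$. For every linear form $f\in O_1(n)^*$, the bilinear form $(a\partial,b\partial)\mapsto f(ab)$ ($a,b\in O_1(n)$) is a commutative $2$-cocycle on the Zassenhaus algebra $W_1(n)$, every commutative $2$-cocycle on $W_1(n)$ is of this form, and the map $f\mapsto[(a\partial,b\partial)\mapsto f(ab)]$ is an isomorphism $O_1(n)^*\cong Z^2_{comm}(W_1(n))$.
   Context: $O_1(n)$ is the divided power algebra with basis $x^{(i)}$, $0\le i\le p^n-1$, and multiplication $x^{(i)}x^{(j)}=\binom{i+j}{j}x^{(i+j)}$ (interpreted as $0$ if $i+j>p^n-1$); $\partial$ is its derivation $\partial(x^{(i)})=x^{(i-1)}$, $\partial(x^{(0)})=0$. The Zassenhaus algebra $W_1(n)=\{a\partial: a\in O_1(n)\}$ has bracket $[a\partial,b\partial]=(a\partial(b)-b\partial(a))\partial$. $Z^2_{comm}(L)$ is the space of symmetric bilinear forms $\varphi:L\times L\to K$ with $\varphi([x,y],z)+\varphi([z,x],y)+\varphi([y,z],x)=0$ for all $x,y,z\in L$. *)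

(* Defs.v *)
From HB Require Import structures.
From mathcomp Require Import all_boot all_order all_algebra.
Set Implicit Arguments. Unset Strict Implicit. Unset Printing Implicit Defensive.
Import GRing.Theory.
Local Open Scope ring_scope.

(* O_1(n) over K, with N = p^n, is modelled as the row space 'rV[K]_N:
   a row vector a stands for \sum_i a 0 i * x^(i). *)
Notation O1 K N := 'rV[K]_N.

(* divided power multiplication: x^(i) x^(j) = C(i+j, j) x^(i+j), 0 if i+j > N-1 *)
Definition mulO (K : fieldType) (N : nat) (a b : O1 K N) : O1 K N :=
  \row_(k < N) \sum_(i < N) \sum_(j < N | (i + j)%N == k)
                  ('C(k, j))%:R * (a 0 i * b 0 j).

(* the derivation d(x^(i)) = x^(i-1), d(x^(0)) = 0 *)
Definition derO (K : fieldType) (N : nat) (a : O1 K N) : O1 K N :=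
  \row_(k < N) \sum_(i < N | nat_of_ord i == k.+1) a 0 i.

(* Zassenhaus algebra W_1(n) = { a d }, a d <-> a; bracket
   [a d, b d] = (a d(b) - b d(a)) d *)
Definition brW (K : fieldType) (N : nat) (a b : O1 K N) : O1 K N :=
  mulO a (derO b) - mulO b (derO a).

Definition comm_cocycle (K : fieldType) (N : nat) (phi : O1 K N -> O1 K N -> K) : Prop :=
  [/\ (forall (c : K) x y z, phi (c *: x + y) z = c * phi x z + phi y z),
      (forall (c : K) x y z, phi x (c *: y + z) = c * phi x y + phi x z),
      (forall x y, phi x y = phi y x) &
      (forall x y z, phi (brW x y) z + phi (brW z x) y + phi (brW y z) x = 0)].

(* Main.v *)
Require Import Defs.
From HB Require Import structures.
From mathcomp Require Import all_boot all_order all_algebra.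
From mathcomp Require Import ring zify.
Import GRing.Theory.
Set Implicit Arguments. Unset Strict Implicit. Unset Printing Implicit Defensive.
Local Open Scope ring_scope.

Section Gen.
Variables (K : fieldType) (N : nat).

Definition ev (m : nat) : 'rV[K]_N := \row_(k < N) ((k : nat) == m)%:R.

Lemma ev_ord (i : 'I_N) : ev i = 'e_i.
Proof. by apply/rowP => k; rewrite !mxE. Qed.

Lemma ev_out m : (N <= m)%N -> ev m = 0.
Proof.
move=> h; apply/rowP => k; rewrite !mxE.
have /negPf -> : (k : nat) != m by apply/eqP => e; move: (ltn_ord k); rewrite e; lia.
by [].
Qed.

Lemma expand (a : 'rV[K]_N) : a = \sum_(i < N) a 0 i *: ev i.
Proof. rewrite {1}[a]row_sum_delta; apply: eq_bigr => i _; by rewrite ev_ord. Qed.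

Definition linP (V : lmodType K) (F : 'rV[K]_N -> V) :=
  forall c x y, F (c *: x + y) = c *: F x + F y.

Section LinP.
Variables (V : lmodType K) (F : 'rV[K]_N -> V) (hF : linP F).
Lemma linP0 : F 0 = 0.
Proof. have E := hF 1 0 0; rewrite scaler0 addr0 scale1r in E.
by apply: (addrI (F 0)); rewrite addr0 -E. Qed.
Lemma linPD x y : F (x + y) = F x + F y.
Proof. by have := hF 1 x y; rewrite !scale1r. Qed.
Lemma linPZ c x : F (c *: x) = c *: F x.
Proof. by rewrite -(addr0 (c *: x)) hF linP0 addr0. Qed.
Lemma linPN x : F (- x) = - F x.
Proof. by rewrite -[- x]scaleN1r linPZ scaleN1r. Qed.
Lemma linPB x y : F (x - y) = F x - F y.
Proof. by rewrite linPD linPN. Qed.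
Lemma linP_expand a : F a = \sum_(i < N) a 0 i *: F (ev i).
Proof.
rewrite {1}[a]expand (big_morph F linPD linP0); apply: eq_bigr => i _.
by rewrite linPZ.
Qed.
End LinP.

Lemma linP_eq (V : lmodType K) (F G : 'rV[K]_N -> V) : linP F -> linP G ->
  (forall i, (i < N)%N -> F (ev i) = G (ev i)) -> forall a, F a = G a.
Proof.
move=> hF hG h a; rewrite (linP_expand hF) (linP_expand hG).
by apply: eq_bigr => i _; rewrite h.
Qed.

Lemma linP_comp (V : lmodType K) (F : 'rV[K]_N -> 'rV[K]_N) (G : 'rV[K]_N -> V) :
  linP F -> linP G -> linP (fun x => G (F x)).
Proof. by move=> hF hG c x y; rewrite hF hG. Qed.

Lemma bilin_eq (V : lmodType K) (B1 B2 : 'rV[K]_N -> 'rV[K]_N -> V) :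
  (forall b, linP (B1 ^~ b)) -> (forall a, linP (B1 a)) ->
  (forall b, linP (B2 ^~ b)) -> (forall a, linP (B2 a)) ->
  (forall i j, (i < N)%N -> (j < N)%N -> B1 (ev i) (ev j) = B2 (ev i) (ev j)) ->
  forall a b, B1 a b = B2 a b.
Proof.
move=> h1 h2 h3 h4 h a b.
apply: (linP_eq (F := B1 ^~ b) (G := B2 ^~ b)) => // i hi.
by apply: linP_eq => // j hj; apply: h.
Qed.

Lemma mulO_linl b : linP (fun a => mulO a b).
Proof.
move=> c x y; apply/rowP => k; rewrite !mxE mulr_sumr -big_split.
apply: eq_bigr => i _; rewrite mulr_sumr -big_split; apply: eq_bigr => j _.
rewrite !mxE /=; ring.
Qed.

Lemma mulO_linr a : linP (mulO a).
Proof.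
move=> c x y; apply/rowP => k; rewrite !mxE mulr_sumr -big_split.
apply: eq_bigr => i _; rewrite mulr_sumr -big_split; apply: eq_bigr => j _.
rewrite !mxE /=; ring.
Qed.


Lemma mulO_ev i j : mulO (ev i) (ev j) = 'C(i + j, j)%:R *: ev (i + j).
Proof.
case: (ltnP i N) => hi; last first.
  rewrite (ev_out hi) -(scale0r (0 : 'rV[K]_N)) (linPZ (mulO_linl _)) scale0r.
  by rewrite ev_out ?scaler0 //; lia.
case: (ltnP j N) => hj; last first.
  rewrite (ev_out hj) -(scale0r (0 : 'rV[K]_N)) (linPZ (mulO_linr _)) scale0r.
  by rewrite ev_out ?scaler0 //; lia.
apply/rowP => k; rewrite !mxE.
rewrite (bigD1 (Ordinal hi)) //= [X in _ + X]big1 ?addr0; last first.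
  move=> i' /negPf hne; apply: big1 => j' _; rewrite !mxE.
  have -> : ((i' : nat) == i) = false by apply/negP => /eqP e; move: hne; rewrite -val_eqE /= e eqxx.
  by rewrite mul0r mulr0.
rewrite big_mkcond (bigD1 (Ordinal hj)) //= [X in _ + X]big1 ?addr0; last first.
  move=> j' /negPf hne; case: ifP => // _; rewrite !mxE.
  have -> : ((j' : nat) == j) = false by apply/negP => /eqP e; move: hne; rewrite -val_eqE /= e eqxx.
  by rewrite mulr0 mulr0.
rewrite !mxE !eqxx mulr1 mulr1 eq_sym.
by case: eqP => [<-|]; rewrite ?mulr1 ?mulr0.
Qed.

Lemma derO_ev0 : derO (ev 0) = 0 :> 'rV[K]_N.
apply/rowP => k; rewrite !mxE big1 // => i /eqP e; by rewrite mxE e. Qed.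

Lemma derO_evS j : (j.+1 < N)%N -> derO (ev j.+1) = ev j :> 'rV[K]_N.
Proof.
move=> hj; apply/rowP => k; rewrite !mxE.
rewrite big_mkcond (bigD1 (Ordinal hj)) //= big1 ?addr0; last first.
  move=> i /negPf hne; case: ifP => // /eqP e; rewrite mxE.
  have -> : ((i : nat) == j.+1) = false by apply/negP => /eqP e'; move: hne; rewrite -val_eqE /= e' eqxx.
  by [].
rewrite mxE eqxx eqSS eq_sym; by case: eqP.
Qed.

Lemma binom_assoc i j k :
  ('C(i + j, j) * 'C(i + j + k, k) = 'C(j + k, k) * 'C(i + j + k, j + k))%N.
Proof.
have h1 := bin_fact (leq_addl i j); rewrite addnK in h1.
have h2 := bin_fact (leq_addl (i + j) k); rewrite addnK in h2.
have h3 := bin_fact (leq_addl j k); rewrite addnK in h3.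
have h4 := bin_fact (leq_addl i (j + k)); rewrite addnK addnA in h4.
apply/eqP; rewrite -(eqn_pmul2r (fact_gt0 i)) -(eqn_pmul2r (fact_gt0 j)) -(eqn_pmul2r (fact_gt0 k)).
apply/eqP.
have -> : ('C(i + j, j) * 'C(i + j + k, k) * i`! * j`! * k`!
   = 'C(i + j + k, k) * (k`! * ('C(i + j, j) * (j`! * i`!))))%N by ring.
rewrite h1 h2.
have -> : ('C(j + k, k) * 'C(i + j + k, j + k) * i`! * j`! * k`!
   = 'C(i + j + k, j + k) * (('C(j + k, k) * (k`! * j`!)) * i`!))%N by ring.
by rewrite h3 h4.
Qed.

Lemma mulOC (a b : 'rV[K]_N) : mulO a b = mulO b a.
Proof.
apply: (bilin_eq (B1 := @mulO K N) (B2 := fun a b => mulO b a)) => //.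
- exact: mulO_linl.
- exact: mulO_linr.
- move=> b'; exact: mulO_linr.
- move=> a'; exact: mulO_linl.
move=> i j _ _; rewrite !mulO_ev addnC.
by rewrite -[in RHS](bin_sub (leq_addl j i)) addnK.
Qed.

Lemma mulOA (a b c : 'rV[K]_N) : mulO (mulO a b) c = mulO a (mulO b c).
Proof.
move: a b; apply: (bilin_eq (B1 := fun a b => mulO (mulO a b) c)
                           (B2 := fun a b => mulO a (mulO b c))).
- move=> b; exact: (linP_comp (mulO_linl b) (mulO_linl c)).
- move=> a; exact: (linP_comp (mulO_linr a) (mulO_linl c)).
- move=> b; exact: mulO_linl.
- move=> a; exact: (linP_comp (mulO_linl c) (mulO_linr a)).
move=> i j _ _; move: c.
apply: linP_eq.
- exact: mulO_linr.
- exact: (linP_comp (mulO_linr _) (mulO_linr _)).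
move=> k _.
rewrite mulO_ev (linPZ (mulO_linl _)) mulO_ev mulO_ev (linPZ (mulO_linr _)) mulO_ev.
by rewrite !scalerA -!natrM binom_assoc addnA.
Qed.

Lemma mulO_ev0 (a : 'rV[K]_N) : mulO a (ev 0) = a.
Proof.
move: a; apply: (linP_eq (F := fun a => mulO a (ev 0)) (G := id)).
- exact: mulO_linl.
- by move=> c x y.
by move=> i _; rewrite mulO_ev addn0 bin0 scale1r.
Qed.

Lemma brW_anti (a b : 'rV[K]_N) : brW b a = - brW a b.
Proof. by rewrite /brW opprB. Qed.

End Gen.

Lemma part1 (K : fieldType) (N : nat) (f : {linear 'rV[K]_N -> K^o}) :
  comm_cocycle (fun a b => f (mulO a b)).
Proof.
split.
- by move=> c x y z; rewrite (mulO_linl z) linearD linearZ.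
- by move=> c x y z; rewrite (mulO_linr x) linearD linearZ.
- by move=> x y; rewrite mulOC.
move=> x y z; rewrite -!linearD.
have sw : forall a b c : 'rV[K]_N, mulO (mulO a b) c = mulO (mulO c b) a.
  by move=> a b c; rewrite mulOC (mulOC a) mulOA.
rewrite /brW !(linPB (mulO_linl _)).
rewrite [mulO (mulO z (derO y)) x]sw [mulO (mulO z (derO x)) y]sw [mulO (mulO y (derO z)) x]sw.
by rewrite !addrA !subrK subrr linear0.
Qed.

Lemma cocycle_sub (K : fieldType) (N : nat) (phi1 phi2 : 'rV[K]_N -> 'rV[K]_N -> K) :
  comm_cocycle phi1 -> comm_cocycle phi2 ->
  comm_cocycle (fun a b => phi1 a b - phi2 a b).
Proof.
case=> l1 r1 s1 c1 [l2 r2 s2 c2]; split.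
- by move=> c x y z; rewrite l1 l2; ring.
- by move=> c x y z; rewrite r1 r2; ring.
- by move=> x y; rewrite s1 s2.
move=> x y z.
have key : forall a1 b1 c1 a2 b2 c2 : K, a1 + b1 + c1 = 0 -> a2 + b2 + c2 = 0 ->
  (a1 - a2) + (b1 - b2) + (c1 - c2) = 0.
  move=> a1 b1 c3 a2 b2 c4 e1 e2.
  have -> : (a1 - a2) + (b1 - b2) + (c3 - c4) = (a1 + b1 + c3) - (a2 + b2 + c4) by ring.
  by rewrite e1 e2 subrr.
exact: key.
Qed.

Section Main.
Variables (K : fieldType) (N : nat).
Hypotheses (hN : (4 < N)%N) (hN0 : N%:R = 0 :> K) (h2 : 2%:R != 0 :> K) (h6 : 6%:R != 0 :> K).
Variable psi : 'rV[K]_N -> 'rV[K]_N -> K.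
Hypothesis hpsi : comm_cocycle psi.
Hypothesis hz : forall a, psi a (ev K N 0) = 0.

Local Notation ev := (ev K N).
Local Notation s i j := (psi (ev i) (ev j)).

Lemma psiL z : linP (V := K^o) (psi ^~ z).
Proof. by case: hpsi => h _ _ _ c x y; exact: h. Qed.
Lemma psiR x : linP (V := K^o) (psi x).
Proof. by case: hpsi => _ h _ _ c y z; exact: h. Qed.
Lemma psiS x y : psi x y = psi y x.
Proof. by case: hpsi. Qed.
Lemma psiC x y z : psi (brW x y) z + psi (brW z x) y + psi (brW y z) x = 0.
Proof. by case: hpsi. Qed.

Lemma psiZ c x z : psi (c *: x) z = c * psi x z.
Proof. exact: (linPZ (psiL z)). Qed.
Lemma psiB x y z : psi (x - y) z = psi x z - psi y z.
Proof. exact: (linPB (psiL z)). Qed.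
Lemma psi0 z : psi 0 z = 0.
Proof. exact: (linP0 (psiL z)). Qed.

Lemma mulO0 (a : 'rV[K]_N) : mulO a 0 = 0.
Proof. exact: (linP0 (mulO_linr a)). Qed.

Lemma brW_SS a b : (a.+1 < N)%N -> (b.+1 < N)%N ->
  brW (ev a.+1) (ev b.+1) =
  'C(a.+1 + b, b)%:R *: ev (a.+1 + b) - 'C(b.+1 + a, a)%:R *: ev (b.+1 + a).
Proof. by move=> ha hb; rewrite /brW !derO_evS // !mulO_ev. Qed.

Lemma brW_0S b : (b.+1 < N)%N -> brW (ev 0) (ev b.+1) = ev b.
Proof.
by move=> hb; rewrite /brW derO_evS // derO_ev0 mulO0 subr0 mulO_ev add0n binn scale1r.
Qed.

Lemma shift a b : (a.+1 < N)%N -> (b.+1 < N)%N -> s a b.+1 = s a.+1 b.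
Proof.
move=> ha hb; have := psiC (ev a.+1) (ev b.+1) (ev 0).
rewrite hz add0r brW_0S // (brW_anti (ev 0)) brW_0S // (linPN (psiL _)).
move/eqP; rewrite addr_eq0 opprK => /eqP ->; exact: psiS.
Qed.

Lemma Lsh d i j : (i + d < N)%N -> (j + d < N)%N -> s i (j + d) = s (i + d) j.
Proof.
elim: d i => [|d IH] i hi hj; first by rewrite !addn0.
rewrite addnS shift; try lia.
by rewrite IH ?addSnnS //; lia.
Qed.

Lemma low i j : (i + j < N)%N -> s i j = 0.
Proof.
move=> h; have := @Lsh j i 0; rewrite add0n => ->; try lia.
by rewrite hz.
Qed.

Lemma high i j : (i < N)%N -> (j < N)%N -> (N <= i + j)%N ->
  s i j = s (N - 1) (i + j - (N - 1)).
Proof.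
move=> hi hj h.
have H1 : (i + (N - 1 - i) < N)%N by lia.
have H2 : (i + j - (N - 1) + (N - 1 - i) < N)%N by lia.
have := Lsh H1 H2.
have -> : (i + j - (N - 1) + (N - 1 - i) = j)%N by lia.
by have -> : (i + (N - 1 - i) = N - 1)%N by lia.
Qed.

Lemma natK m : (m <= N)%N -> (N - m)%:R = - m%:R :> K.
Proof. by move=> h; rewrite natrB // hN0 sub0r. Qed.

Lemma binNK : 'C(N - 1, N - 3)%:R = 1 :> K.
Proof.
have e : 'C(N - 1, N - 3) = 'C(N - 1, 2).
  have -> : (N - 3 = (N - 1) - 2)%N by lia.
  by rewrite bin_sub //; lia.
rewrite e; apply: (mulfI h2).
have := mul_bin_left (N - 1) 1; rewrite bin1 => E.
rewrite -natrM E natrM mulr1.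
have -> : (N - 1 - 1 = N - 2)%N by lia.
by rewrite !natK //; try lia; ring.
Qed.

Lemma instII j k : (1 < j)%N -> (0 < k)%N -> (j < N)%N -> (k < N)%N -> (N < j + k)%N ->
  (j%:R - k%:R) * s j k = 0.
Proof.
case: j => [|j'] // ; case: k => [|k'] // hj hk hjN hkN hjk.
have := psiC (ev 1) (ev j'.+1) (ev k'.+1).
have h1N : (1 < N)%N by lia.
rewrite brW_SS // (brW_anti (ev 1)) brW_SS // brW_SS //.
rewrite (@ev_out K N (j'.+1 + k')) ?(@ev_out K N (k'.+1 + j')); try lia.
rewrite !scaler0 subrr psi0 addr0 !add1n !addn0 !binSn !bin0 !scale1r.
rewrite (linPN (psiL _)) !psiB !psiZ (psiS (ev k'.+1)).
move=> E; rewrite -E; ring.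
Qed.

Lemma instI : s (N - 1) 1 = 0.
Proof.
have h1N : (1 < N)%N by lia.
have h2N : (2 < N)%N by lia.
have hk : ((N - 3).+1 < N)%N by lia.
have := psiC (ev 1) (ev 2) (ev (N - 3).+1).
rewrite brW_SS // (brW_anti (ev 1)) brW_SS // brW_SS //.
rewrite !add1n !addn0 !binSn !bin0 !scale1r.
have -> : (2 + (N - 3) = N - 1)%N by lia.
rewrite bin1; have -> : ((N - 3).+1 + 1 = N - 1)%N by lia.
have -> : ((N - 3).+1 = N - 2)%N by lia.
rewrite (linPN (psiL _)) !psiB !psiZ.
rewrite (@high 2 (N - 2)) ?(@high (N - 2) 2); try lia.
have -> : (2 + (N - 2) - (N - 1) = 1)%N by lia.
have -> : (N - 2 + 2 - (N - 1) = 1)%N by lia.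
rewrite binNK (natK (m := 1)) ?(natK (m := 2)); try lia.
move=> E; have : 6%:R * s (N - 1) 1 = 0 by rewrite -E; ring.
by move/eqP; rewrite mulf_eq0 (negPf h6) => /eqP.
Qed.
Lemma instIII : s (N - 1) (N - 1) = 0.
Proof.
have h1N : (1 < N)%N by lia.
have hk : ((N - 3).+1 < N)%N by lia.
have hj : ((N - 2).+1 < N)%N by lia.
have := psiC (ev 2) (ev (N - 2).+1) (ev (N - 3).+1).
have h2N : (2 < N)%N by lia.
rewrite brW_SS // (brW_anti (ev 2)) brW_SS // brW_SS //.
rewrite (@ev_out K N (2 + (N - 2))) ?(@ev_out K N ((N - 2).+1 + 1))
  ?(@ev_out K N ((N - 2).+1 + (N - 3))) ?(@ev_out K N ((N - 3).+1 + (N - 2))); try lia.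
rewrite !scaler0 !subrr !psi0 add0r addr0.
rewrite bin1; have -> : ((N - 3).+1 + 1 = N - 1)%N by lia.
have -> : (2 + (N - 3) = N - 1)%N by lia.
have -> : ((N - 2).+1 = N - 1)%N by lia.
rewrite (linPN (psiL _)) !psiB !psiZ binNK (natK (m := 1)); try lia.
move=> E; have : 2%:R * s (N - 1) (N - 1) = 0.
  by rewrite -[RHS]oppr0 -E; ring.
by move/eqP; rewrite mulf_eq0 (negPf h2) => /eqP.
Qed.
Lemma tzero r : (r < N)%N -> s (N - 1) r = 0.
Proof.
move=> hr.
case: (ltnP r 2) => hr2.
  case: r hr hr2 => [|[|r]] // hr _; last exact: instI.
case: (leqP (N - 1) r) => hrN.
  have -> : r = (N - 1)%N by lia.
  exact: instIII.
have e1 := @instII r (N - 1) ltac:(lia) ltac:(lia) ltac:(lia) ltac:(lia) ltac:(lia).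
have e2 := @instII r.+1 (N - 2) ltac:(lia) ltac:(lia) ltac:(lia) ltac:(lia) ltac:(lia).
rewrite (natK (m := 1)) in e1; last lia.
rewrite (natK (m := 2)) in e2; last lia.
have E : s r.+1 (N - 2) = s (N - 1) r.
  rewrite -shift; try lia.
  have -> : (N - 2).+1 = (N - 1)%N by lia.
  by rewrite psiS.
rewrite psiS in e1; rewrite E in e2.
have : 2%:R * s (N - 1) r = (r.+1%:R - - 2%:R) * s (N - 1) r - (r%:R - - 1) * s (N - 1) r.
  by rewrite -addn1 natrD; ring.
rewrite e1 e2 subrr.
by move/eqP; rewrite mulf_eq0 (negPf h2) => /eqP.
Qed.
Lemma szero i j : (i < N)%N -> (j < N)%N -> s i j = 0.
Proof.
move=> hi hj; case: (ltnP (i + j) N) => h; first exact: low.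
rewrite high // tzero //; lia.
Qed.

Lemma psizero a b : psi a b = 0.
Proof.
apply: (@bilin_eq K N K^o psi (fun _ _ => 0)) => //.
- exact: psiL.
- exact: psiR.
- by move=> b' c x y; rewrite scaler0 addr0.
- by move=> a' c x y; rewrite scaler0 addr0.
by move=> i j hi hj; rewrite szero.
Qed.
End Main.

Section LF.
Variables (K : fieldType) (N : nat) (w : 'rV[K]_N).
Definition lf (a : 'rV[K]_N) : K^o := \sum_i a 0 i * w 0 i.
Fact lf_nmod : nmod_morphism lf.
Proof. split; first by rewrite /lf big1 // => i _; rewrite mxE mul0r.
move=> x y; rewrite /lf -big_split /=; apply: eq_bigr => i _; by rewrite mxE mulrDl. Qed.
HB.instance Definition _ := GRing.isNmodMorphism.Build 'rV[K]_N K^o lf lf_nmod.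
Fact lf_scale : scalable lf.
Proof. move=> c x; change (lf (c *: x) = c * lf x); rewrite /lf mulr_sumr; apply: eq_bigr => i _. by rewrite mxE mulrA. Qed.
HB.instance Definition _ := GRing.isScalable.Build K 'rV[K]_N K^o *:%R lf lf_scale.
End LF.

Unset Implicit Arguments.

Theorem proposition2p6 (K : fieldType) (p n : nat)
    (hp : prime p) (hp3 : (3 < p)%N) (hchar : p \in [pchar K]) (hn : (1 <= n)%N) :
  (* every f in O_1(n)^* gives a commutative 2-cocycle (a d, b d) |-> f(ab) *)
  (forall f : {linear O1 K (p ^ n) -> K^o},
      comm_cocycle (fun a b => f (mulO a b)))
  (* every commutative 2-cocycle is of this form *)
  /\ (forall phi : O1 K (p ^ n) -> O1 K (p ^ n) -> K,
      comm_cocycle phi ->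
      exists f : {linear O1 K (p ^ n) -> K^o},
        forall a b, phi a b = f (mulO a b))
  (* the (linear) map f |-> [(a d, b d) |-> f(ab)] is injective *)
  /\ (forall f g : {linear O1 K (p ^ n) -> K^o},
      (forall a b, f (mulO a b) = g (mulO a b)) -> forall a, f a = g a).
Proof.
split; first by move=> f; exact: part1.
split; last first.
  by move=> f g h a; rewrite -(mulO_ev0 a) h.
have hN : (4 < p ^ n)%N.
  have hp5 : (4 < p)%N by case: (p =P 4) hp => [-> //|]; lia.
  case: n hn => // n' _; rewrite expnS; apply: (leq_trans hp5); by rewrite leq_pmulr // expn_gt0 (prime_gt0 hp).
have hN0 : (p ^ n)%:R = 0 :> K.
  by rewrite natrX (pcharf0 hchar) expr0n eqn0Ngt hn.
have h2 : 2%:R != 0 :> K.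
  apply/negP; rewrite -(dvdn_pcharf hchar) => /dvdn_leq; lia.
have h6 : 6%:R != 0 :> K.
  apply/negP; rewrite -(dvdn_pcharf hchar) (_ : 6 = 2 * 3)%N // Euclid_dvdM //.
  by case/orP => /dvdn_leq; lia.
move=> phi hphi.
pose w := \row_(i < p ^ n) phi (ev K (p ^ n) i) (ev K (p ^ n) 0).
exists (lf w).
have hf : forall a, lf w a = phi a (ev K (p ^ n) 0).
  have hL : linP (V := K^o) (phi ^~ (ev K (p ^ n) 0)).
    by case: hphi => h _ _ _ c x y; exact: h.
  move=> a; rewrite (linP_expand hL a) /lf; apply: eq_bigr => i _.
  by rewrite mxE.
have hpsi := cocycle_sub hphi (part1 (lf w)).
have hz : forall a, phi a (ev K (p ^ n) 0) - lf w (mulO a (ev K (p ^ n) 0)) = 0.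
  by move=> a; rewrite mulO_ev0 hf subrr.
move=> a b; apply/eqP; rewrite -subr_eq0; apply/eqP.
exact: (psizero hN hN0 h2 h6 hpsi hz).
Qed.
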